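(* Let $n\ge 2$ and let $S=\{A_1,\dots,A_m\}$ be a finite set of real $n\times n$ matrices such that every $A\in S$ satisfies $A\mathbf{1}=\mathbf{1}$ and $\|Ax\|_{\mathcal{P}}\le\|x\|_{\mathcal{P}}$ for all $x$. Then the switched system $x(t+1)=A_{\sigma(t)}x(t)$ converges to a multiple of $\mathbf{1}$ for every initial condition $x(0)=x_0\in\mathbb{R}^n$ and every sequence $\sigma:\mathbb{N}\to\{1,\dots,m\}$ if and only if the self-loop of node 1 is the only cycle in the graph of faces $\mathcal{G}$ of $S$.
   Context: $\mathbf{1}=(1,\dots,1)^\top$, $\|x\|_{\mathcal{P}}=\tfrac12(\max_i x_i-\min_i x_i)$, $\mathcal{P}=\{x:\|x\|_{\mathcal{P}}\le 1\}$, which satisfies $\mathcal{P}=-\mathcal{P}$. A face of a polyhedron $\mathcal{Q}$ is a non-empty subset $F$ with $F=\mathcal{Q}$ or $F=\mathcal{Q}\cap\{x:b^\top x=c\}$ where $b^\top x\le c$ on $\mathcal{Q}$; an open face is the relative interior of a face; a proper open face is the relative interior of a face other than $\mathcal{Q}$. If $F$ is a proper open face of $\mathcal{P}$, so is $-F$, and $\pm F$ denotes $F\cup(-F)$. The graph of faces $\mathcal{G}$ is the directed graph with one node for each pair $\{F,-F\}$ of opposite proper open faces of $\mathcal{P}$ and one additional node, ''node 1'', representing $\operatorname{int}(\mathcal{P})$; there is an edge from the node of $F_i$ to the node of $F_j$ whenever some $A\in S$ satisfies $AF_i\subseteq\pm F_j$ (self-loops allowed), an edge from the node of $F_i$ to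 node 1 whenever some $A\in S$ satisfies $AF_i\subseteq\operatorname{int}(\mathcal{P})$, and a self-loop at node 1. *)

(* Defs.v *)
From HB Require Import structures.
From mathcomp Require Import all_boot all_order all_algebra.
From mathcomp Require Import all_classical all_reals all_analysis.
Import numFieldNormedType.Exports.
Set Implicit Arguments. Unset Strict Implicit. Unset Printing Implicit Defensive.
Import Order.TTheory GRing.Theory Num.Theory.
Local Open Scope classical_set_scope.
Local Open Scope ring_scope.

Section Defs.
Variables (R : realType) (n : nat).
Notation vec := 'cV[R]_n.

Definition ones : vec := const_mx 1.

(* ||x||_P = (max_i x_i - min_i x_i)/2, written as (max_{i,j} (x_i - x_j))/2 *)
Definition pnorm (x : vec) : R :=
  (\big[Num.max/0]_(i < n) \big[Num.max/0]_(j < n) (x i 0 - x j 0)) / 2.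

Definition Pset : set vec := [set x | pnorm x <= 1].

Definition dotv (b x : vec) : R := \sum_(i < n) b i 0 * x i 0.

Definition is_face (Q F : set vec) : Prop :=
  (exists x, F x) /\
  (F = Q \/ exists (b : vec) (c : R),
      (forall x, Q x -> dotv b x <= c) /\ F = Q `&` [set x | dotv b x = c]).

Definition aff_hull (F : set vec) : set vec :=
  [set y | exists (k : nat) (lam : 'I_k -> R) (pts : 'I_k -> vec),
      (forall i, F (pts i)) /\ \sum_(i < k) lam i = 1 /\
      y = \sum_(i < k) lam i *: pts i].

Definition near_by (x y : vec) (e : R) : Prop := forall i, `|y i 0 - x i 0| < e.

Definition rel_interior (F : set vec) : set vec :=
  [set x | F x /\ exists e : R, 0 < e /\
     forall y, aff_hull F y -> near_by x y e -> F y].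

Definition interior_v (F : set vec) : set vec :=
  [set x | F x /\ exists e : R, 0 < e /\ forall y, near_by x y e -> F y].

Definition proper_open_face (G : set vec) : Prop :=
  exists F, is_face Pset F /\ F <> Pset /\ G = rel_interior F.

Definition negset (F : set vec) : set vec := [set x | F (- x)].
Definition pmset (F : set vec) : set vec := F `|` negset F.
Definition mimage (A : 'M[R]_n) (F : set vec) : set vec := [set A *m x | x in F].

Definition gnode := set (set vec).
Definition face_node (F : set vec) : gnode := [set F; negset F].
Definition node1 : gnode := [set interior_v Pset].

Definition is_gnode (N : gnode) : Prop :=
  N = node1 \/ exists F, proper_open_face F /\ N = face_node F.

Definition gedge (m : nat) (S : 'I_m -> 'M[R]_n) (N1 N2 : gnode) : Prop :=
  (exists Fi Fj, proper_open_face Fi /\ proper_open_face Fj /\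
     N1 = face_node Fi /\ N2 = face_node Fj /\
     exists k, mimage (S k) Fi `<=` pmset Fj)
  \/ (exists Fi, proper_open_face Fi /\ N1 = face_node Fi /\ N2 = node1 /\
     exists k, mimage (S k) Fi `<=` interior_v Pset)
  \/ (N1 = node1 /\ N2 = node1).

Definition is_cycle (m : nat) (S : 'I_m -> 'M[R]_n) (s : seq gnode) : Prop :=
  (0 < size s)%N /\
  (forall i, (i < size s)%N -> is_gnode (nth node1 s i)) /\
  (forall i j, (i < size s)%N -> (j < size s)%N ->
      nth node1 s i = nth node1 s j -> i = j) /\
  (forall i, (i < size s)%N ->
      gedge S (nth node1 s i) (nth node1 s ((i.+1) %% size s))).

Definition only_cycle_is_node1_loop (m : nat) (S : 'I_m -> 'M[R]_n) : Prop :=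
  forall s, is_cycle S s -> s = [:: node1].

Fixpoint traj (m : nat) (S : 'I_m -> 'M[R]_n) (sigma : nat -> 'I_m) (x0 : vec)
    (t : nat) : vec :=
  match t with
  | O => x0
  | t'.+1 => S (sigma t') *m traj S sigma x0 t'
  end.

Definition converges_to_multiple_of_ones (x : nat -> vec) : Prop :=
  exists c : R, forall i : 'I_n, (fun t => x t i 0) @ \oo --> c.

End Defs.

(* Main.v *)
Require Import Defs.
From HB Require Import structures.
From mathcomp Require Import all_boot all_order all_algebra.
From mathcomp Require Import all_classical all_reals all_analysis.
From mathcomp Require Import ring lra zify.
Import Order.TTheory GRing.Theory Num.Theory.
Local Open Scope classical_set_scope.
Local Open Scope ring_scope.
Set Implicit Arguments. Unset Strict Implicit. Unset Printing Implicit Defensive.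

Section P1.
Variables (R : realType) (n : nat).
Notation vec := 'cV[R]_n.

Lemma pnorm_leP (x : vec) r : 0 <= r ->
  (pnorm x <= r) <-> (forall i j, x i 0 - x j 0 <= 2 * r).
Proof.
move=> r0; rewrite /pnorm ler_pdivrMr // [r * 2]mulrC; split.
- move=> /bigmax_leP [_ H] i j; have := H i isT => /bigmax_leP [_ H2]; exact: H2.
- move=> H; apply/bigmax_leP; split; first by rewrite mulr_ge0.
  move=> i _; apply/bigmax_leP; split; first by rewrite mulr_ge0.
  by move=> j _; exact: H.
Qed.

Lemma pnorm_ge0 (x : vec) : 0 <= pnorm x.
Proof.
rewrite /pnorm divr_ge0 //; exact: bigmax_ge_id.
Qed.

Lemma pnorm_diff (x : vec) i j : x i 0 - x j 0 <= 2 * pnorm x.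
Proof.
by move: i j; apply/pnorm_leP; [exact: pnorm_ge0|].
Qed.

Lemma pnorm_ltP (x : vec) r : 0 < r ->
  (pnorm x < r) <-> (forall i j, x i 0 - x j 0 < 2 * r).
Proof.
move=> r0; rewrite /pnorm ltr_pdivrMr // [r * 2]mulrC; split.
- move=> /bigmax_ltP [_ H] i j; have := H i isT => /bigmax_ltP [_ H2]; exact: H2.
- move=> H; apply/bigmax_ltP; split; first by rewrite mulr_gt0.
  move=> i _; apply/bigmax_ltP; split; first by rewrite mulr_gt0.
  by move=> j _; exact: H.
Qed.

End P1.

Section P2.
Variables (R : realType) (n : nat).
Notation vec := 'cV[R]_n.

Definition inP (x : vec) := forall i j, x i 0 - x j 0 <= 2.
Definition tp (x : vec) : {set 'I_n * 'I_n} := [set p | x p.1 0 - x p.2 0 == 2].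

Lemma PsetE (x : vec) : Pset x <-> inP x.
Proof.
rewrite /Pset /inP /=; have := @pnorm_leP R n x 1 ler01; rewrite mulr1; done.
Qed.

Lemma sum_coord k (lam : 'I_k -> R) (pts : 'I_k -> vec) i :
  (\sum_(l < k) lam l *: pts l) i 0 = \sum_(l < k) lam l * pts l i 0.
Proof. by rewrite summxE; apply: eq_bigr => l _; rewrite mxE. Qed.

Lemma dotv_sum (b : vec) k (lam : 'I_k -> R) (pts : 'I_k -> vec) :
  dotv b (\sum_(l < k) lam l *: pts l) = \sum_(l < k) lam l * dotv b (pts l).
Proof.
rewrite /dotv; under eq_bigr => i _ do rewrite sum_coord big_distrr.
rewrite exchange_big /=; apply: eq_bigr => l _; rewrite big_distrr /=.
by apply: eq_bigr => i _; rewrite mulrCA.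
Qed.

Lemma dotv_lin (b u v : vec) (a c : R) :
  dotv b (a *: u + c *: v) = a * dotv b u + c * dotv b v.
Proof.
rewrite /dotv !mulr_sumr -big_split /=; apply: eq_bigr => i _; rewrite !mxE; ring.
Qed.

Lemma aff_eq (F : set vec) (f : vec -> R) c y :
  (forall k (lam : 'I_k -> R) pts,
     f (\sum_(l < k) lam l *: pts l) = \sum_(l < k) lam l * f (pts l)) ->
  (forall p, F p -> f p = c) -> aff_hull F y -> f y = c.
Proof.
move=> flin Fc [k [lam [pts [Fp [s1 ->]]]]]; rewrite flin.
under eq_bigr => l _ do rewrite Fc //.
by rewrite -mulr_suml s1 mul1r.
Qed.

Lemma aff_coord (F : set vec) i j c y :
  (forall p, F p -> p i 0 - p j 0 = c) -> aff_hull F y -> y i 0 - y j 0 = c.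
Proof.
apply: (@aff_eq F (fun p => p i 0 - p j 0) c y) => k lam pts.
by rewrite !sum_coord -sumrB; apply: eq_bigr => l _; rewrite mulrBr.
Qed.

Lemma aff_dot (F : set vec) b c y :
  (forall p, F p -> dotv b p = c) -> aff_hull F y -> dotv b y = c.
Proof. by apply: aff_eq => k lam pts; rewrite dotv_sum. Qed.

Lemma margin (x : vec) : inP x -> exists a, 0 <= a /\ a < 2 /\
  forall i j, (i, j) \notin tp x -> x i 0 - x j 0 <= a.
Proof.
move=> xP.
exists (\big[Num.max/0]_(i < n) \big[Num.max/0]_(j < n | (i, j) \notin tp x)
          (x i 0 - x j 0)).
split; first exact: bigmax_ge_id.
split.
  apply/bigmax_ltP; split => // i _; apply/bigmax_ltP; split => // j.
  rewrite inE => /negP H; rewrite lt_neqAle xP andbT; apply/negP => /eqP E.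
  by apply: H; rewrite E.
move=> i j H; apply: (le_trans _ (le_bigmax _ _ i)).
by apply: (bigmax_sup j) => //.
Qed.

Lemma slack (x : vec) : inP x -> exists e : R, 0 < e /\ forall y, near_by x y e ->
  forall i j, (i, j) \notin tp x -> y i 0 - y j 0 < 2.
Proof.
move=> /margin [a [a0 [a2 H]]]; exists ((2 - a) / 2); split.
  by apply: divr_gt0; lra.
move=> y ny i j ij; have := H _ _ ij; have := ny i; have := ny j.
rewrite !ltr_norml => /andP [h1 h2] /andP [h3 h4] h5; lra.
Qed.

End P2.

Section P3.
Variables (R : realType) (n : nat).
Notation vec := 'cV[R]_n.
Local Notation PS := (@Pset R n).

Lemma tpE (x : vec) i j : ((i, j) \in tp x) = (x i 0 - x j 0 == 2).
Proof. by rewrite inE. Qed.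

Lemma face_hyp (F : set vec) : is_face PS F -> F <> PS ->
  exists b c, (forall x, PS x -> dotv b x <= c) /\
    (forall x, F x <-> inP x /\ dotv b x = c) /\ exists x, F x.
Proof.
move=> [ne [FP|[b [c [hb hF]]]]] FnP; first by [].
exists b, c; split => //; split => // x; rewrite hF /=; split.
  by move=> [/PsetE h1 h2].
by move=> [h1 h2]; split => //; apply/PsetE.
Qed.

Lemma face_bd (F : set vec) x : is_face PS F -> F <> PS -> F x ->
  inP x /\ exists i j, x i 0 - x j 0 = 2.
Proof.
move=> Ff FnP Fx.
have [b [c [hb [hF _]]]] := face_hyp Ff FnP.
have [xP dx] := (hF x).1 Fx.
split => //.
have [//|nex] := pselect (exists i j, x i 0 - x j 0 = 2).
exfalso; apply: FnP.
have strict : forall i j, x i 0 - x j 0 < 2.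
  move=> i j; rewrite lt_neqAle xP andbT; apply/eqP => E; apply: nex; by exists i, j.
have p1 : pnorm x < 1 by apply/pnorm_ltP => //; rewrite mulr1.
have p0 := pnorm_ge0 x.
apply/seteqP; split => y; first by move=> /hF [/PsetE].
move=> Py; apply/hF; split; first by apply/PsetE.
apply/eqP; rewrite eq_le hb //=.
set t := (1 - pnorm x) / (1 + pnorm x).
have t0 : 0 < t by apply: divr_gt0; lra.
have ht : t * (1 + pnorm x) = 1 - pnorm x.
  by rewrite /t mulfVK //; apply/eqP => h; lra.
set w := (1 + t) *: x + (- t) *: y.
have wP : PS w.
  apply/PsetE => i j; rewrite !mxE.
  have h1 := pnorm_diff x i j.
  have h2 := (PsetE y).1 Py j i.
  have h3 : (1 + t) * (x i 0 - x j 0) <= (1 + t) * (2 * pnorm x).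
    by rewrite ler_wpM2l //; lra.
  have h4 : t * (y j 0 - y i 0) <= t * 2 by rewrite ler_wpM2l //; lra.
  have e : (1 + t) * x i 0 + - t * y i 0 - ((1 + t) * x j 0 + - t * y j 0) =
     (1 + t) * (x i 0 - x j 0) + t * (y j 0 - y i 0) by ring.
  rewrite e; lra.
have := hb w wP; rewrite /w dotv_lin dx => h.
have h' : t * c <= t * dotv b y by lra.
by rewrite -(ler_pM2l t0).
Qed.

Lemma pof_bd (G : set vec) x : proper_open_face G -> G x ->
  inP x /\ exists i j, x i 0 - x j 0 = 2.
Proof.
move=> [F [Ff [FnP ->]]] [Fx _]; exact: face_bd Ff FnP Fx.
Qed.

Lemma pof_ne (G : set vec) : proper_open_face G -> exists x, G x.
Proof.
move=> [F [Ff [FnP ->]]].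
have [b [c [hb [hF [x0 Fx0]]]]] := face_hyp Ff FnP.
have mid : forall x z, F x -> F z -> exists w, F w /\ tp w \subset tp x :&: tp z.
  move=> x z /hF [xP dx] /hF [zP dz].
  exists ((1/2) *: x + (1/2) *: z); split.
    apply/hF; split; last by rewrite dotv_lin dx dz; field.
    move=> i j; rewrite !mxE; have := xP i j; have := zP i j; lra.
  apply/fintype.subsetP => [[i j]]; rewrite !inE /= !mxE => /eqP h.
  have := xP i j; have := zP i j => h1 h2.
  by apply/andP; split; apply/eqP; lra.
have claim : forall k x, F x -> (#|tp x| <= k)%N ->
    exists x', F x' /\ forall z, F z -> tp x' \subset tp z.
  elim=> [|k IH] x Fx hk.
    exists x; split => // z _; move: hk; rewrite leqn0 cards_eq0 => /eqP ->.
    exact: finset.sub0set.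
  have [[z [Fz nsub]]|nex] := pselect (exists z, F z /\ ~~ (tp x \subset tp z)).
    have [w [Fw sw]] := mid x z Fx Fz.
    apply: (IH w Fw); rewrite -ltnS; apply: leq_trans hk.
    apply: (leq_ltn_trans (subset_leq_card sw)); apply: fintype.proper_card.
    apply/fintype.properP; split; first exact: finset.subsetIl.
    move: nsub => /fintype.subsetPn [p p1 p2]; exists p => //; by rewrite inE p1 p2.
  exists x; split => // z Fz; apply/negPn/negP => H; apply: nex; by exists z.
have [x [Fx xmin]] := claim _ x0 Fx0 (leqnn _).
exists x; split => //.
have [xP dx] := (hF x).1 Fx.
have [e [e0 he]] := slack xP.
exists e; split => // y ay ny; apply/hF; split; last exact: aff_dot (fun p Fp => ((hF p).1 Fp).2) ay.
move=> i j; case: (boolP ((i, j) \in tp x)) => ij.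
  suff -> : y i 0 - y j 0 = 2 by [].
  apply: (aff_coord _ ay) => p Fp; have := fintype.subsetP (xmin p Fp) _ ij.
  by rewrite tpE => /eqP.
by apply/ltW; apply: he.
Qed.

End P3.

Section P4.
Variables (R : realType) (n : nat).
Notation vec := 'cV[R]_n.
Local Notation PS := (@Pset R n).

Definition Gx (x : vec) : set vec :=
  [set y | inP y /\ forall p, p \in tp x -> y p.1 0 - y p.2 0 = 2].
Definition Fx (x : vec) : set vec := [set y | inP y /\ tp y = tp x].
Definition bvec (T : {set 'I_n * 'I_n}) : vec :=
  \sum_(p in T) (delta_mx p.1 0 - delta_mx p.2 0).
Definition pert (y : vec) k (r : R) : vec := y + r *: delta_mx k 0.

Lemma pertE y k r i : pert y k r i 0 = y i 0 + (if i == k then r else 0).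
Proof. by rewrite !mxE eqxx andbT; case: eqP => _; rewrite ?mulr1 ?mulr0. Qed.

Lemma dotv_delta i (y : vec) : dotv (delta_mx i 0) y = y i 0.
Proof.
rewrite /dotv (bigD1 i) //= big1 ?addr0; first by rewrite mxE !eqxx mul1r.
by move=> k /negbTE kn; rewrite mxE kn mul0r.
Qed.

Lemma dotv_bvec T (y : vec) : dotv (bvec T) y = \sum_(p in T) (y p.1 0 - y p.2 0).
Proof.
rewrite /dotv /bvec; under eq_bigr => i _ do rewrite summxE big_distrl /=.
rewrite exchange_big /=; apply: eq_bigr => p _.
rewrite -!dotv_delta /dotv -sumrB; apply: eq_bigr => i _; rewrite !mxE; ring.
Qed.

Lemma Gx_face (x : vec) : inP x -> tp x != finset.set0 -> is_face PS (Gx x) /\ Gx x <> PS.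
Proof.
move=> xP /finset.set0Pn [p0 p0in].
have hb : forall y, PS y -> dotv (bvec (tp x)) y <= 2 *+ #|tp x|.
  move=> y /PsetE yP; rewrite dotv_bvec -sumr_const; apply: ler_sum => p _; exact: yP.
split.
  split; first by exists x; split => // p; rewrite inE => /eqP.
  right; exists (bvec (tp x)), (2 *+ #|tp x|); split => //.
  apply/seteqP; split => y.
    move=> [yP yT]; split; first by apply/PsetE.
    by rewrite /= dotv_bvec -sumr_const; apply: eq_bigr => p /yT.
  move=> [/PsetE yP /= hy]; split => // p pin.
  have s0 : \sum_(q in tp x) (2 - (y q.1 0 - y q.2 0)) = 0.
    by rewrite sumrB sumr_const -dotv_bvec hy subrr.
  have h0 : forall q, q \in tp x -> 0 <= 2 - (y q.1 0 - y q.2 0).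
    by move=> q _; rewrite subr_ge0; exact: yP.
  have := psumr_eq0P h0 s0 pin.
  by move/eqP; rewrite subr_eq0 => /eqP <-.
move=> E; have : Gx x 0 by rewrite E; apply/PsetE => i j; rewrite !mxE subrr.
move=> [_ /(_ p0 p0in)]; rewrite !mxE subrr => h.
by move: h; lra.
Qed.


Lemma aff2 (G : set vec) y u : G y -> G u -> aff_hull G (2 *: y - u).
Proof.
move=> Gy Gu.
exists 2%N, (fun l : 'I_2 => if l == ord0 then 2 else -1),
  (fun l : 'I_2 => if l == ord0 then y else u).
split; first by move=> l; case: ifP.
rewrite !big_ord_recl !big_ord0 /=; split; first by ring.
by rewrite addr0 scaleN1r.
Qed.

Lemma perturb (G : set vec) y k r e :
  (forall z, aff_hull G z -> near_by y z e -> G z) -> G y ->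
  G (pert y k r) -> `|r| < e -> G (pert y k (- r)).
Proof.
move=> H Gy Gu re; apply: H; last first.
  move=> i; rewrite pertE addrC addKr; case: ifP => _; rewrite ?normrN //.
  by rewrite normr0 (le_lt_trans _ re).
have -> : pert y k (- r) = 2 *: y - pert y k r.
  apply/matrixP => i j; rewrite !mxE; ring.
exact: aff2.
Qed.

Lemma Fx_relint (x : vec) : inP x -> Fx x = rel_interior (Gx x).
Proof.
move=> xP; apply/seteqP; split => y.
  move=> [yP ty]; split.
    by split => // p; rewrite -ty inE => /eqP.
  have [e [e0 he]] := slack yP; exists e; split => // z az nz.
  split.
    move=> i j; case: (boolP ((i, j) \in tp y)) => ij; last exact/ltW/he.
    suff -> : z i 0 - z j 0 = 2 by [].
    by apply: (aff_coord _ az) => p [_ Hp]; apply: (Hp (i, j)); rewrite -ty.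
  by move=> p pin; apply: (aff_coord _ az) => q [_ Hq]; exact: Hq.
move=> [[yP yT] [e [e0 He]]]; split => //.
apply/eqP; rewrite finset.eqEsubset; apply/andP; split; last first.
  by apply/fintype.subsetP => p /yT; rewrite inE => ->.
apply/fintype.subsetP => [[a b]] ab; case: (boolP ((a, b) \in tp x)) => // nab.
exfalso; move: ab; rewrite tpE => /eqP hab.
have hmax : forall i, y i 0 <= y a 0 by move=> i; have := yP i b; lra.
have hmin : forall j, y b 0 <= y j 0 by move=> j; have := yP a j; lra.
have anb : a != b by apply/eqP => E; move: hab; rewrite E subrr; lra.
set d := Num.min (e / 2) 1.
have d0 : 0 < d by rewrite lt_min; apply/andP; split => //; apply: divr_gt0.
have de : d < e by rewrite gt_min; apply/orP; left; lra.
have d1 : d <= 1 by rewrite ge_min lexx orbT.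
have nd : `|d| = d by apply: gtr0_norm.
have [[c ac]|nc] := pselect (exists c, (a, c) \in tp x).
  have [[d' db]|nd'] := pselect (exists d', (d', b) \in tp x).
    move: nab; rewrite tpE; apply/negP/negPn/eqP.
    move: ac db; rewrite !tpE => /eqP h1 /eqP h2.
    have := xP d' c; have := xP a b; lra.
  have [hz _] : Gx x (pert y b (- d)).
  apply: (@perturb (Gx x) y b d e) => //.
  - split.
      move=> i j; rewrite !pertE; have := yP i j; have := hmin j; have := hmin i.
      by case: eqP => [->|_]; case: eqP => [->|_]; lra.
    move=> p pin; rewrite !pertE.
    have p2 : (p.2 == b) = false.
      by apply/negP => /eqP E; apply: nd'; exists p.1; rewrite -E -surjective_pairing.
    have p1 : (p.1 == b) = false.
      apply/negP => /eqP E; have := yT p pin; rewrite E => h.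
      have := yP a p.2; lra.
    by rewrite p1 p2 !addr0; exact: yT.
  - by rewrite nd.
  move: (hz a b); rewrite !pertE (negbTE anb) eqxx; lra.
have [hz _] : Gx x (pert y a (- - d)).
apply: (@perturb (Gx x) y a (- d) e) => //.
- split.
    move=> i j; rewrite !pertE; have := yP i j; have := hmax j; have := hmax i.
    by case: eqP => [->|_]; case: eqP => [->|_]; lra.
  move=> p pin; rewrite !pertE.
  have p1 : (p.1 == a) = false.
    by apply/negP => /eqP E; apply: nc; exists p.2; rewrite -E -surjective_pairing.
  have p2 : (p.2 == a) = false.
    apply/negP => /eqP E; have := yT p pin; rewrite E => h.
    have := yP p.1 b; lra.
  by rewrite p1 p2 !addr0; exact: yT.
- by rewrite normrN nd.
move: (hz a b); rewrite !pertE opprK eq_sym (negbTE anb) eqxx; lra.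
Qed.

Lemma Fx_pof (x : vec) : inP x -> tp x != finset.set0 -> proper_open_face (Fx x).
Proof.
move=> xP xT; have [h1 h2] := Gx_face xP xT.
by exists (Gx x); split => //; split => //; exact: Fx_relint.
Qed.

Lemma Fx_self (x : vec) : inP x -> Fx x x.
Proof. by []. Qed.

End P4.

Section P5.
Variables (R : realType) (n : nat).
Notation vec := 'cV[R]_n.
Local Notation PS := (@Pset R n).

Definition swp (T : {set 'I_n * 'I_n}) : {set 'I_n * 'I_n} := [set p | (p.2, p.1) \in T].

Lemma swpK T : swp (swp T) = T.
Proof. by apply/setP => [[i j]]; rewrite !inE. Qed.

Lemma tp_opp (x : vec) : tp (- x) = swp (tp x).
Proof.
apply/setP => [[i j]]; rewrite !inE /= !mxE.
by apply/eqP/eqP => h; lra.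
Qed.

Lemma inP_opp (x : vec) : inP (- x) <-> inP x.
Proof.
split => h i j; have := h j i; rewrite ?mxE; lra.
Qed.

Lemma negset_Fx (x : vec) : negset (Fx x) = Fx (- x).
Proof.
apply/seteqP; split => y.
  move=> [h1 h2]; split; first exact/inP_opp.
  by rewrite tp_opp -h2 tp_opp swpK.
move=> [h1 h2]; split; first exact/inP_opp.
by rewrite tp_opp h2 tp_opp swpK.
Qed.

Lemma negsetK (F : set vec) : negset (negset F) = F.
Proof. by apply/seteqP; split => x; rewrite /negset /= opprK. Qed.

Lemma inP_pnorm (x : vec) : inP x <-> pnorm x <= 1.
Proof. by rewrite (pnorm_leP x ler01) mulr1. Qed.

Lemma strict_pnorm (x : vec) : (forall i j, x i 0 - x j 0 < 2) <-> pnorm x < 1.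
Proof. by rewrite (pnorm_ltP x ltr01) mulr1. Qed.

Lemma tp0_strict (x : vec) : inP x -> tp x = finset.set0 -> forall i j, x i 0 - x j 0 < 2.
Proof.
move=> xP t0 i j; rewrite lt_neqAle xP andbT; apply/negP => /eqP h.
have : (i, j) \in tp x by rewrite inE h.
by rewrite t0 inE.
Qed.

Lemma strict_tp0 (x : vec) : (forall i j, x i 0 - x j 0 < 2) -> tp x = finset.set0.
Proof.
move=> h; apply/setP => [[i j]]; rewrite !inE /=; apply/negP => /eqP e.
by have := h i j; rewrite e ltxx.
Qed.

Lemma lincombE (a b : R) (U V : vec) i : (a *: U + b *: V) i 0 = a * U i 0 + b * V i 0.
Proof. by rewrite !mxE. Qed.

Section Map.
Variable A : 'M[R]_n.
Hypothesis Ane : forall x : vec, pnorm (A *m x) <= pnorm x.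

Lemma inP_map (x : vec) : inP x -> inP (A *m x).
Proof. by move=> /inP_pnorm h; apply/inP_pnorm; apply: le_trans (Ane x) h. Qed.

Lemma tp0_map (x : vec) : inP x -> tp x = finset.set0 -> tp (A *m x) = finset.set0.
Proof.
move=> xP t0; apply: strict_tp0; apply/strict_pnorm.
apply: le_lt_trans (Ane x) _; apply/strict_pnorm; exact: tp0_strict.
Qed.

Lemma tp_map_sub (y z : vec) : inP y -> inP z -> tp y = tp z ->
  tp (A *m y) \subset tp (A *m z).
Proof.
move=> yP zP tyz0.
have tyz : forall p, (p \in tp y) = (p \in tp z) by move=> p; rewrite tyz0.
clear tyz0; apply/fintype.subsetP => [[i j]]; rewrite !tpE => /eqP hy.
have [a [a0 [a2 ha]]] := margin yP.
set t := (2 - a) / (2 + a).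
have t0 : 0 < t by apply: divr_gt0; lra.
have ht : t * (2 + a) = 2 - a by rewrite /t mulfVK //; apply/eqP => h; lra.
set w := (1 + t) *: y + (- t) *: z.
have wP : inP w.
  move=> k l; rewrite !mxE.
  have e : (1 + t) * y k 0 + - t * z k 0 - ((1 + t) * y l 0 + - t * z l 0) =
     (1 + t) * (y k 0 - y l 0) - t * (z k 0 - z l 0) by ring.
  rewrite e; case: (boolP ((k, l) \in tp y)) => kl.
    move: (kl); rewrite tyz in kl; move: kl; rewrite !tpE => /eqP -> /eqP ->; lra.
  have h1 := ha _ _ kl; have h2 := zP l k.
  have h3 : (1 + t) * (y k 0 - y l 0) <= (1 + t) * a by rewrite ler_wpM2l //; lra.
  have h4 : - t * (z k 0 - z l 0) <= t * 2.
    have -> : - t * (z k 0 - z l 0) = t * (z l 0 - z k 0) by ring.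
    by rewrite ler_wpM2l //; lra.
  have h5 : (1 + t) * a + t * 2 = 2 by lra.
  lra.
have hw := inP_map wP i j.
have hz := inP_map zP i j.
move: hw; rewrite /w mulmxDr -!scalemxAr.
set Ay := A *m y; set Az := A *m z; rewrite !lincombE.
move: hy hz; rewrite -/Ay -/Az => hy hz hw.
have e : (1 + t) * Ay i 0 + - t * Az i 0 - ((1 + t) * Ay j 0 + - t * Az j 0) =
  (1 + t) * (Ay i 0 - Ay j 0) - t * (Az i 0 - Az j 0) by ring.
rewrite e hy in hw.
apply/eqP; apply/le_anti; rewrite hz /=.
have : t * 2 <= t * ((A *m z) i 0 - (A *m z) j 0) by lra.
by rewrite ler_pM2l.
Qed.

Lemma tp_map (y z : vec) : inP y -> inP z -> tp y = tp z ->
  tp (A *m y) = tp (A *m z).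
Proof.
move=> yP zP tyz; apply/eqP; rewrite finset.eqEsubset; apply/andP; split;
  exact: tp_map_sub.
Qed.

End Map.

Lemma interior_strict (x : vec) : interior_v PS x -> forall i j, x i 0 - x j 0 < 2.
Proof.
move=> [/PsetE xP [e [e0 He]]] i j; rewrite lt_neqAle xP andbT.
apply/negP => /eqP h.
have ij : i != j by apply/eqP => E; move: h; rewrite E subrr; lra.
have H1 : near_by x (pert x i (e / 2)) e.
  move=> k; rewrite pertE addrC addKr; case: ifP => _.
    by rewrite gtr0_norm; [lra|apply: divr_gt0].
  by rewrite normr0.
have ji : (j == i) = false by rewrite eq_sym; exact: negbTE ij.
move: (He _ H1) => /PsetE /(_ i j); rewrite !pertE eqxx ji.
have : 0 < e / 2 by apply: divr_gt0.
lra.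
Qed.

Lemma node1_ne (G : set vec) x : G x -> (exists i j, x i 0 - x j 0 = 2) ->
  @node1 R n <> face_node G.
Proof.
move=> Gx [i [j h]] E.
have : @node1 R n G by rewrite E; left.
rewrite /node1 /= => GE; move: Gx; rewrite GE => /interior_strict /(_ i j).
by rewrite h ltxx.
Qed.

Lemma face_node_eq (F G : set vec) : face_node F = face_node G -> G = F \/ G = negset F.
Proof.
move=> E; have : face_node F G by rewrite E; left.
by [].
Qed.

End P5.

Section P6.
Variables (R : realType) (n m : nat) (S : 'I_m -> 'M[R]_n).
Notation vec := 'cV[R]_n.
Hypothesis Hne : forall k (x : vec), pnorm (S k *m x) <= pnorm x.

Definition node (y : vec) : gnode R n := face_node (Fx y).
Definition key (y : vec) : {set {set 'I_n * 'I_n}} := [set tp y; swp (tp y)]%SET.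

Lemma Fx_tp (a b : vec) : tp a = tp b -> Fx a = Fx b.
Proof. by move=> h; rewrite /Fx h. Qed.

Lemma face_node_neg (F : set vec) : face_node (negset F) = face_node F.
Proof.
apply/seteqP; split => G [->|->].
- by right.
- by left; rewrite negsetK.
- by right; rewrite negsetK.
- by left.
Qed.

Lemma key_node (a b : vec) : key a = key b -> node a = node b.
Proof.
move=> E; have : tp b \in key a by rewrite E !inE eqxx.
rewrite !inE => /orP [/eqP h|/eqP h].
  by rewrite /node (Fx_tp h).
by rewrite /node (@Fx_tp b (- a)) ?tp_opp // -negset_Fx face_node_neg.
Qed.

Lemma node_key (a b : vec) : inP b -> node a = node b -> key a = key b.
Proof.
move=> bP /face_node_eq [h|h].
  have : Fx b b by []. rewrite h => -[_ e]; by rewrite /key e.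
have : Fx b b by []. rewrite h negset_Fx => -[_ e].
rewrite /key e tp_opp swpK; apply/setP => T; rewrite !inE orbC //.
Qed.

Lemma traj_inP sigma (x : vec) t : inP x -> inP (traj S sigma x t).
Proof. by move=> xP; elim: t => //= t IH; apply: inP_map. Qed.

Lemma gedge_step (y : vec) k : inP y -> tp y != finset.set0 ->
  tp (S k *m y) != finset.set0 -> gedge S (node y) (node (S k *m y)).
Proof.
move=> yP y0 z0; left; exists (Fx y), (Fx (S k *m y)).
split; first exact: Fx_pof.
split; first by apply: Fx_pof => //; apply: inP_map.
do 2 split => //; exists k; move=> _ [w [wP wt] <-]; left; split.
  exact: inP_map.
exact: tp_map.
Qed.


Hypothesis Hcyc : only_cycle_is_node1_loop S.

Definition K := #|{: {set {set 'I_n * 'I_n}}}|.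

Lemma traj_tp0 sigma (x : vec) t s : inP x -> tp (traj S sigma x t) = finset.set0 ->
  tp (traj S sigma x (t + s)) = finset.set0.
Proof.
move=> xP t0; elim: s => [|s IH]; first by rewrite addn0.
rewrite addnS /=; apply: tp0_map => //; exact: traj_inP.
Qed.

Local Open Scope nat_scope.
Lemma cycle_contract sigma (x : vec) : inP x -> tp (traj S sigma x K) = finset.set0.
Proof.
move=> xP; set X := traj S sigma x.
apply/eqP; apply/negPn/negP => hK.
have ne : forall t, (t <= K)%N -> tp (X t) != finset.set0.
  move=> t tK; apply/negP => /eqP t0; move/negP: hK; apply; apply/eqP.
  rewrite -(subnKC tK); exact: traj_tp0.
have XS : forall t, X t.+1 = S (sigma t) *m X t by [].
have inPX : forall t, inP (X t) by move=> t; exact: traj_inP.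
set f := fun t : 'I_K.+1 => key (X t).
have : ~~ injectiveb f.
  apply/negP => /injectiveP inj; have := leq_card f inj.
  by rewrite card_ord ltnn.
move/injectivePn => [i [j ij fij]].
pose P d := [exists t1 : 'I_K.+1, exists t2 : 'I_K.+1,
  (t1 < t2)%N && (nat_of_ord t2 == t1 + d)%N && (key (X t1) == key (X t2))].
have exP : exists d, P d.
  case: (ltngtP i j) => [lt|gt|eq].
  - exists (j - i)%N; apply/existsP; exists i; apply/existsP; exists j.
    rewrite lt /=; apply/andP; split; first by apply/eqP; lia.
    by apply/eqP.
  - exists (i - j)%N; apply/existsP; exists j; apply/existsP; exists i.
    rewrite gt /=; apply/andP; split; first by apply/eqP; lia.
    by apply/eqP.
  - by move: ij; rewrite (val_inj eq) eqxx.
case: (ex_minnP exP) => d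
  /existsP [t1 /existsP [t2 /andP [/andP [lt12 /eqP e12] /eqP k12]]] dmin.
have dpos : (0 < d)%N by lia.
have t2K : (t2 <= K)%N by have := ltn_ord t2; lia.
have mini : forall i j, (i < j)%N -> (j < d)%N -> key (X (t1 + i)) != key (X (t1 + j)).
  move=> i' j' ij' jd; apply/negP => /eqP kij.
  have h1 : (t1 + i' < K.+1)%N by lia.
  have h2 : (t1 + j' < K.+1)%N by lia.
  have : P (j' - i')%N.
    apply/existsP; exists (Ordinal h1); apply/existsP; exists (Ordinal h2).
    rewrite /= kij eqxx andbT; apply/andP; split; first by lia.
    by apply/eqP; lia.
  move/dmin; lia.
set s := [seq node (X (t1 + i)) | i <- iota 0 d].
have nth_s : forall i, (i < d)%N -> nth (@node1 R n) s i = node (X (t1 + i)).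
  by move=> i' id; rewrite (nth_map 0%N) ?size_iota // nth_iota.
have sz : size s = d by rewrite size_map size_iota.
have neX : forall i, (i <= d)%N -> tp (X (t1 + i)) != finset.set0.
  by move=> i' id; apply: ne; lia.
have cyc : is_cycle S s.
  split; first by rewrite sz.
  split.
    move=> i'; rewrite sz => id; rewrite nth_s //; right; exists (Fx (X (t1 + i'))).
    split => //; apply: Fx_pof; [exact: inPX | apply: neX; lia].
  split.
    move=> i' j'; rewrite sz => id jd; rewrite !nth_s // => E.
    have kij := node_key (inPX _) E.
    case: (ltngtP i' j') => // [lt|gt].
      by move: (mini _ _ lt jd); rewrite kij eqxx.
    by move: (mini _ _ gt id); rewrite kij eqxx.
  move=> i'; rewrite sz => id.
  rewrite nth_s //.
  have step : gedge S (node (X (t1 + i'))) (node (X (t1 + i').+1)).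
    rewrite XS; apply: gedge_step; [exact: inPX | apply: neX; lia |].
    rewrite -XS -addnS; apply: neX; lia.
  case: (ltnP i'.+1 d) => hd.
    by rewrite modn_small // nth_s // addnS.
  have e1 : i'.+1 = d by lia.
  rewrite e1 modnn nth_s // addn0.
  have e2 : (t1 + i').+1 = t2 by lia.
  by rewrite (key_node k12) -e2.
have es := Hcyc cyc.
have := nth_s 0%N dpos; rewrite es /= addn0 => h.
have [[a b] ab] := finset.set0Pn _ (neX 0%N (leq0n _)).
move: ab; rewrite addn0 tpE => /eqP ab.
apply: (@node1_ne _ _ (Fx (X t1)) (X t1)) => //.
by exists a, b.
Qed.

Local Close Scope nat_scope.
End P6.

Section P7.
Variables (R : realType) (n : nat).
Notation vec := 'cV[R]_n.

Definition vI (I : {set 'I_n}) : vec := \col_i (if i \in I then 2 else 0).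

Lemma pm_bound (M : 'M[R]_n) r : M *m ones R n = ones R n ->
  (forall I, pnorm (M *m vI I) <= r) -> forall x : vec, pnorm (M *m x) <= r * pnorm x.
Proof.
move=> M1 Mr x.
have r0 : 0 <= r by apply: le_trans (Mr finset.set0); exact: pnorm_ge0.
have p0 := pnorm_ge0 x.
apply/pnorm_leP; first exact: mulr_ge0.
move=> i j.
set mu := \big[Num.min/x i 0]_k x k 0.
have mu1 : forall k, mu <= x k 0 by move=> k; exact: bigmin_le.
have mu2 : forall k, x k 0 - 2 * (pnorm x) <= mu.
  move=> k; apply/bigmin_geP; split; first by have := pnorm_diff x k i; lra.
  by move=> l _; have := pnorm_diff x k l; lra.
set d := fun k => M i k - M j k.
set I := [set k | 0 < d k]%SET.
have sumM : forall a, \sum_k M a k = 1.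
  move=> a; have := congr1 (fun A : vec => A a 0) M1; rewrite !mxE => <-.
  by apply: eq_bigr => k _; rewrite mxE mulr1.
have sd : \sum_k d k = 0 by rewrite /d sumrB !sumM subrr.
have e1 : (M *m x) i 0 - (M *m x) j 0 = \sum_k d k * (x k 0 - mu).
  rewrite !mxE -sumrB.
  have -> : \sum_k d k * (x k 0 - mu) = \sum_k d k * x k 0 - (\sum_k d k) * mu.
    by rewrite mulr_suml -sumrB; apply: eq_bigr => k _; rewrite mulrBr.
  by rewrite sd mul0r subr0; apply: eq_bigr => k _; rewrite /d mulrBl.
have e2 : (M *m vI I) i 0 - (M *m vI I) j 0 = \sum_k d k * vI I k 0.
  by rewrite !mxE -sumrB; apply: eq_bigr => k _; rewrite /d mulrBl.
have b1 : \sum_k d k * (x k 0 - mu) <= \sum_k (pnorm x) * (d k * vI I k 0).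
  apply: ler_sum => k _; rewrite mxE inE.
  have h1 := mu1 k; have h2 := mu2 k.
  case: ltrP => dk.
    have : d k * (x k 0 - mu) <= d k * (2 * (pnorm x)) by rewrite ler_wpM2l //; [apply: ltW|lra].
    lra.
  have : d k * (x k 0 - mu) <= 0.
    by rewrite mulr_le0_ge0 //; lra.
  rewrite mulr0 mulr0; lra.
have b2 := pnorm_diff (M *m vI I) i j.
have b3 : (pnorm x) * ((M *m vI I) i 0 - (M *m vI I) j 0) <= (pnorm x) * (2 * r).
  rewrite ler_wpM2l //; apply: le_trans b2 _; rewrite ler_wpM2l //; exact: Mr.
rewrite e1; apply: le_trans b1 _; rewrite -mulr_sumr -e2.
apply: le_trans b3 _; lra.
Qed.

End P7.

Section P8.
Variables (R : realType) (n m : nat) (S : 'I_m -> 'M[R]_n).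
Notation vec := 'cV[R]_n.
Hypothesis Hone : forall k, S k *m ones R n = ones R n.
Hypothesis Hne : forall k (x : vec), pnorm (S k *m x) <= pnorm x.
Hypothesis Hcyc : only_cycle_is_node1_loop S.
Variable k0 : 'I_m.

Local Notation KK := (@K n).
Local Notation vI := (@vI R n).

Fixpoint pm (sigma : nat -> 'I_m) t : 'M[R]_n :=
  match t with O => 1%:M | t'.+1 => S (sigma t') *m pm sigma t' end.

Lemma traj_pm sigma (x : vec) t : traj S sigma x t = pm sigma t *m x.
Proof. by elim: t => [|t IH] /=; rewrite ?mul1mx // IH mulmxA. Qed.

Lemma pm_ext sigma sigma' t : (forall s, (s < t)%N -> sigma s = sigma' s) ->
  pm sigma t = pm sigma' t.
Proof.
elim: t => [|t IH] H //=; rewrite H // IH // => s hs; apply: H; exact: ltnW.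
Qed.

Lemma pm_ones sigma t : pm sigma t *m ones R n = ones R n.
Proof. by elim: t => [|t IH] /=; rewrite ?mul1mx // -mulmxA IH Hone. Qed.

Definition sigf (f : {ffun 'I_KK -> 'I_m}) (t : nat) : 'I_m :=
  odflt k0 (omap f (insub t)).

Definition rho : R := \big[Num.max/0]_(f : {ffun 'I_KK -> 'I_m})
  \big[Num.max/0]_(I : {set 'I_n}) pnorm (pm (sigf f) KK *m vI I).

Lemma vI_inP I : inP (vI I).
Proof. by move=> i j; rewrite !mxE; case: ifP; case: ifP => _ _; lra. Qed.

Lemma rho_ge0 : 0 <= rho.
Proof. exact: bigmax_ge_id. Qed.

Lemma rho_lt1 : rho < 1.
Proof.
apply/bigmax_ltP; split => // f _; apply/bigmax_ltP; split => // I _.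
rewrite -traj_pm; apply/strict_pnorm; apply: tp0_strict.
  apply: traj_inP => //; exact: vI_inP.
apply: cycle_contract => //; exact: vI_inP.
Qed.

Lemma contract sigma (x : vec) : pnorm (traj S sigma x KK) <= rho * pnorm x.
Proof.
set f := [ffun i : 'I_KK => sigma i].
rewrite traj_pm (@pm_ext sigma (sigf f)); last first.
  move=> s hs; rewrite /sigf; case: insubP => [u _ <-|]; first by rewrite /= ffunE.
  by rewrite hs.
apply: pm_bound; first exact: pm_ones.
move=> I; apply: (bigmax_sup f) => //; exact: (bigmax_sup I).
Qed.

Lemma traj_shift sigma (x : vec) t s :
  traj S sigma x (t + s) = traj S (fun u => sigma (t + u)%N) (traj S sigma x t) s.
Proof. by elim: s => [|s IH]; rewrite ?addn0 // addnS /= IH. Qed.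

Lemma contract_t sigma (x : vec) t :
  pnorm (traj S sigma x (t + KK)) <= rho * pnorm (traj S sigma x t).
Proof. by rewrite traj_shift; exact: contract. Qed.

End P8.

Import numFieldNormedType.Exports.
Section P9.
Variables (R : realType) (n m : nat) (S : 'I_m -> 'M[R]_n).
Notation vec := 'cV[R]_n.
Hypothesis Hone : forall k, S k *m ones R n = ones R n.
Hypothesis Hne : forall k (x : vec), pnorm (S k *m x) <= pnorm x.
Hypothesis Hcyc : only_cycle_is_node1_loop S.
Variable k0 : 'I_m.
Variables (sigma : nat -> 'I_m) (x0 : vec).

Local Notation KK := (@K n).
Let X := traj S sigma x0.
Let q t := pnorm (X t).
Let r := rho S k0.

Lemma KK_gt0 : (0 < KK)%N.
Proof. by apply/card_gt0P; exists finset.set0. Qed.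

Lemma q_mono t s : q (t + s)%N <= q t.
Proof.
elim: s => [|s IH]; first by rewrite addn0.
by rewrite addnS; apply: le_trans IH; exact: Hne.
Qed.

Lemma q_K t : q (t + KK)%N <= r * q t.
Proof. exact: contract_t. Qed.

Lemma q_pow k : q (k * KK)%N <= r ^+ k * q 0%N.
Proof.
elim: k => [|k IH]; first by rewrite mul0n expr0 mul1r.
rewrite mulSn addnC; apply: le_trans (q_K _) _.
rewrite exprS -mulrA ler_wpM2l //; exact: rho_ge0.
Qed.

Lemma q_small e : 0 < e -> exists N, forall t, (N <= t)%N -> q t < e.
Proof.
move=> e0.
have q00 : 0 <= q 0%N by exact: pnorm_ge0.
have r0 : 0 <= r by exact: rho_ge0.
have r1 : r < 1 by exact: rho_lt1.
have : (GRing.exp r : R ^nat) @ \oo --> 0 by apply: cvg_expr; rewrite ger0_norm.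
move/cvgrPdist_lt => /(_ (e / (q 0%N + 1))) [].
  by apply: divr_gt0 => //; lra.
move=> N _ HN; exists (N * KK)%N => t hN.
have := HN N (leqnn N); rewrite /= sub0r normrN ger0_norm ?exprn_ge0 // => h.
have h2 : r ^+ N * (q 0%N + 1) < e by rewrite -ltr_pdivlMr //; lra.
have h3 : r ^+ N * q 0%N <= r ^+ N * (q 0%N + 1).
  by rewrite ler_wpM2l ?exprn_ge0 //; lra.
rewrite -(subnKC hN); apply: le_lt_trans (q_mono _ _) _.
apply: le_lt_trans (q_pow _) _; lra.
Qed.


Let Cm := \big[Num.max/0]_(k' : 'I_m) \big[Num.max/0]_(i : 'I_n) \sum_k `|S k' i k|.
Let C := 2 * Cm.

Lemma C_ge0 : 0 <= C.
Proof. by rewrite /C mulr_ge0 //; exact: bigmax_ge_id. Qed.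

Lemma step_bound t i : `|X t.+1 i 0 - X t i 0| <= C * q t.
Proof.
have -> : X t.+1 = S (sigma t) *m X t by [].
set A := S (sigma t); set x := X t.
have sumA : \sum_k A i k = 1.
  have := congr1 (fun B : vec => B i 0) (Hone (sigma t)); rewrite !mxE => <-.
  by apply: eq_bigr => k _; rewrite mxE mulr1.
have e : (A *m x) i 0 - x i 0 = \sum_k A i k * (x k 0 - x i 0).
  rewrite mxE; symmetry; under eq_bigr do rewrite mulrBr.
  by rewrite sumrB -mulr_suml sumA mul1r.
rewrite e; apply: le_trans (ler_norm_sum _ _ _) _.
have qt : 0 <= q t by exact: pnorm_ge0.
have b : forall k, `|A i k * (x k 0 - x i 0)| <= `|A i k| * (2 * q t).
  move=> k; rewrite normrM ler_wpM2l //; rewrite ler_norml.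
  have := pnorm_diff x k i; have := pnorm_diff x i k; rewrite /q -/x => h1 h2.
  apply/andP; split; lra.
apply: le_trans (ler_sum _ (fun k _ => b k)) _.
rewrite -mulr_suml.
have hM : \sum_k `|A i k| <= Cm.
  by apply: (bigmax_sup (sigma t)) => //; exact: (bigmax_sup i).
rewrite /C; have := ler_wpM2r (mulr_ge0 (ler0n _ 2) qt) hM.
move=> h; apply: le_trans h _; lra.
Qed.

Lemma L_bound L t i : `|X (t + L)%N i 0 - X t i 0| <= L%:R * C * q t.
Proof.
elim: L => [|L IH]; first by rewrite addn0 subrr normr0 mul0r mul0r.
rewrite addnS.
have h1 := step_bound (t + L) i.
have h2 : C * q (t + L)%N <= C * q t by rewrite ler_wpM2l //; [exact: C_ge0|exact: q_mono].
have h3 := ler_normD (X (t + L).+1 i 0 - X (t + L)%N i 0) (X (t + L)%N i 0 - X t i 0).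
have e : X (t + L).+1 i 0 - X (t + L)%N i 0 + (X (t + L)%N i 0 - X t i 0) =
  X (t + L).+1 i 0 - X t i 0 by ring.
rewrite e in h3; rewrite -natr1 mulrDl mul1r mulrDl; lra.
Qed.


Let Kc := KK%:R * C / (1 - r).

Lemma big_bound L t i : `|X (t + L)%N i 0 - X t i 0| <= Kc * q t.
Proof.
have r0 : 0 <= r by exact: rho_ge0.
have r1 : r < 1 by exact: rho_lt1.
have C0 := C_ge0.
have KC0 : 0 <= KK%:R * C by rewrite mulr_ge0.
have Kc0 : 0 <= Kc by rewrite /Kc divr_ge0 //; lra.
have hKc : Kc * (1 - r) = KK%:R * C by rewrite /Kc divfK //; apply/eqP; lra.
have Kcr : 0 <= Kc * r by rewrite mulr_ge0.
move: t; elim/ltn_ind: L => L IH t.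
have qt : 0 <= q t by exact: pnorm_ge0.
case: (leqP L KK) => hL.
  apply: le_trans (L_bound L t i) _.
  have h1 : L%:R * C <= Kc.
    apply: (@le_trans _ _ (KK%:R * C)); last by lra.
    by rewrite ler_wpM2r // ler_nat.
  by rewrite ler_wpM2r.
have e : (t + L = (t + KK) + (L - KK))%N by rewrite -addnA subnKC // ltnW.
rewrite e.
have hLK : (L - KK < L)%N by have := KK_gt0; rewrite ltn_subrL => ->; rewrite (ltn_trans KK_gt0 hL).
have h1 := IH (L - KK)%N hLK (t + KK)%N.
have h2 := L_bound KK t i.
have h3 : Kc * q (t + KK)%N <= Kc * (r * q t) by rewrite ler_wpM2l //; exact: q_K.
have h4 := ler_normD (X (t + KK + (L - KK))%N i 0 - X (t + KK)%N i 0)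
  (X (t + KK)%N i 0 - X t i 0).
have e2 : X (t + KK + (L - KK))%N i 0 - X (t + KK)%N i 0 + (X (t + KK)%N i 0 - X t i 0)
  = X (t + KK + (L - KK))%N i 0 - X t i 0 by ring.
rewrite e2 in h4.
have e3 : Kc * (r * q t) + KK%:R * C * q t = Kc * q t.
  by rewrite -hKc; ring.
lra.
Qed.

Lemma coord_cvg i : cvg ((fun t => X t i 0) @ \oo).
Proof.
have r1 : r < 1 by exact: rho_lt1.
have C0 := C_ge0.
have KC0 : 0 <= KK%:R * C by rewrite mulr_ge0.
have Kc0 : 0 <= Kc by rewrite /Kc divr_ge0 //; lra.
apply/cauchy_cvgP; apply/cauchy_exP => e e0.
have [N HN] := q_small (divr_gt0 e0 (ltr_wpDl Kc0 ltr01)).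
exists (X N i 0); apply: filterS (nbhs_infty_ge N) => t hN.
rewrite -ball_normE /ball_ /=.
have := big_bound (t - N) N i; rewrite subnKC // distrC => h.
apply: le_lt_trans h _.
have hq := HN N (leqnn N).
have qN : 0 <= q N by exact: pnorm_ge0.
have : Kc * q N <= Kc * (e / (Kc + 1)) by rewrite ler_wpM2l //; exact: ltW.
have : Kc * (e / (Kc + 1)) < e.
  rewrite mulrA ltr_pdivrMr; last by lra.
  lra.
lra.
Qed.


Lemma traj_conv (i0 : 'I_n) : converges_to_multiple_of_ones X.
Proof.
exists (lim ((fun t => X t i0 0) @ \oo)) => i.
have hc := @coord_cvg i0.
set c := lim _ in hc *.
apply/cvgrPdist_lt => e e0.
have H1 := (cvgrPdist_lt _ _).1 hc (e / 2) (divr_gt0 e0 (ltr0n _ 2)).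
have [N HN] := q_small (divr_gt0 e0 (ltr0n _ 4)).
near=> t.
have h1 : `|c - X t i0 0| < e / 2 by near: t; exact: H1.
have hN : (N <= t)%N by near: t; exact: nbhs_infty_ge.
have hq := HN t hN.
have d1 := pnorm_diff (X t) i0 i; have d2 := pnorm_diff (X t) i i0.
have h3 : `|X t i0 0 - X t i 0| <= 2 * q t by rewrite ler_norml; apply/andP; split; rewrite /q; lra.
have h4 := ler_normD (c - X t i0 0) (X t i0 0 - X t i 0).
have e2 : c - X t i0 0 + (X t i0 0 - X t i 0) = c - X t i 0 by ring.
rewrite e2 in h4; lra.
Unshelve. all: by end_near.
Qed.

End P9.

Import numFieldNormedType.Exports.
Section P10.
Variables (R : realType) (n m : nat) (S : 'I_m -> 'M[R]_n).
Notation vec := 'cV[R]_n.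
Hypothesis Hne : forall k (x : vec), pnorm (S k *m x) <= pnorm x.

Definition memb (N : gnode R n) (y : vec) := exists G, N G /\ G y.

Lemma pof_node1 (F : set vec) : proper_open_face F -> @node1 R n <> face_node F.
Proof.
move=> pF; have [x Fx] := pof_ne pF; have [_ tx] := pof_bd pF Fx.
exact: node1_ne Fx tx.
Qed.

Lemma node1_out N2 : gedge S (@node1 R n) N2 -> N2 = @node1 R n.
Proof.
case=> [[Fi [Fj [pFi [_ [E _]]]]]|[[Fi [pFi [E _]]]|[_ ->]]] //.
  by have := pof_node1 pFi.
by have := pof_node1 pFi.
Qed.

Lemma memb_tight N y : (N = @node1 R n \/ exists F, proper_open_face F /\ N = face_node F) ->
  N <> @node1 R n -> memb N y -> exists i j, y i 0 - y j 0 = 2.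
Proof.
move=> [->//|[F [pF ->]]] _ [G [[->|->] Gy]].
  by have [_] := pof_bd pF Gy.
have [_ [i [j h]]] := pof_bd pF Gy.
by exists j, i; move: h; rewrite !mxE; lra.
Qed.

Lemma memb_step N1 N2 : N1 <> @node1 R n -> N2 <> @node1 R n -> gedge S N1 N2 ->
  exists k, forall y, memb N1 y -> memb N2 (S k *m y).
Proof.
move=> n1 n2 [[Fi [Fj [pFi [pFj [E1 [E2 [k hk]]]]]]]|[[Fi [_ [_ [E _]]]]|[E _]]];
  [|by []|by []].
exists k => y [G [NG Gy]]; move: NG Gy; rewrite E2 E1 => -[->|->] Gy.
  have : pmset Fj (S k *m y) by apply: hk; exists y.
  case=> h.
    by exists Fj; split; [left|].
  by exists (negset Fj); split; [right|].
have : pmset Fj (S k *m (- y)) by apply: hk; exists (- y).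
rewrite mulmxN; case=> h.
  by exists (negset Fj); split; [right|].
by exists Fj; split; [left|]; move: h; rewrite /negset /= opprK.
Qed.


Lemma lhs_rhs : (forall (x0 : vec) (sigma : nat -> 'I_m),
  converges_to_multiple_of_ones (traj S sigma x0)) -> only_cycle_is_node1_loop S.
Proof.
move=> Hconv s [sz [gn [dist ed]]].
have [[i [id ei]]|nn] := pselect (exists i, (i < size s)%N /\ nth (@node1 R n) s i = @node1 R n).
  have e2 : nth (@node1 R n) s ((i.+1) %% size s) = @node1 R n.
    by apply: node1_out; have := ed i id; rewrite ei.
  have e3 : (i.+1 %% size s)%N = i.
    by apply: dist => //; [exact: ltn_pmod | rewrite e2 ei].
  have s1 : size s = 1%N.
    case: (ltnP i.+1 (size s)) => h.
      by move: e3; rewrite modn_small // => /eqP; rewrite eqn_leq ltnn.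
    have hs : i.+1 = size s by apply/eqP; rewrite eqn_leq h id.
    by move: e3; rewrite hs modnn => i0; rewrite -hs -i0.
  move: ei id; case: s {sz gn dist ed e2 e3} s1 => [//|a [|b s']] //= _.
  by case: i => //= ->.
exfalso.
have nn' : forall i, (i < size s)%N -> nth (@node1 R n) s i <> @node1 R n.
  by move=> i hi E; apply: nn; exists i.
have szm : forall i, (i %% size s < size s)%N by move=> i; exact: ltn_pmod.
have step : forall i, exists k, (i < size s)%N -> forall y,
    memb (nth (@node1 R n) s i) y -> memb (nth (@node1 R n) s (i.+1 %% size s)) (S k *m y).
  move=> i; case: (ltnP i (size s)) => hi.
    have [k hk] := memb_step (nn' i hi) (nn' _ (szm _)) (ed i hi).
    by exists k => _.
  have [k _] := memb_step (nn' 0%N sz) (nn' _ (szm _)) (ed 0%N sz).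
  by exists k.
have [kf hkf] := choice step.
pose sigma t := kf (t %% size s)%N.
have [E0|[F0 [pF0 E0]]] := gn 0%N sz; first by apply: (nn' 0%N sz).
have [y0 Fy0] := pof_ne pF0.
set X := traj S sigma y0.
have inv : forall t, memb (nth (@node1 R n) s (t %% size s)) (X t).
  elim=> [|t IH].
    by rewrite mod0n; exists F0; split => //; rewrite E0; left.
  have := hkf (t %% size s)%N (szm _) _ IH.
  by rewrite -addn1 modnDml addn1.
have [c hc] := Hconv y0 sigma.
have ev : \forall t \near \oo, forall i, `|c - X t i 0| < 1 / 2.
  apply: filter_forall => i.
  move/cvgrPdist_lt: (hc i); apply; exact: divr_gt0.
have [t ht] := filter_ex ev.
have [i [j hij]] := memb_tight (gn _ (szm t)) (nn' _ (szm t)) (inv t).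
have := ht i; have := ht j; rewrite !ltr_norml => /andP [h1 h2] /andP [h3 h4].
clear -hij h1 h2 h3 h4; lra.
Qed.

End P10.


Unset Implicit Arguments.

Theorem theorem1 (R : realType) (n m : nat) (S : 'I_m -> 'M[R]_n) :
  (2 <= n)%N ->
  (forall k, S k *m ones R n = ones R n) ->
  (forall k (x : 'cV[R]_n), pnorm (S k *m x) <= pnorm x) ->
  ((forall (x0 : 'cV[R]_n) (sigma : nat -> 'I_m),
      converges_to_multiple_of_ones (traj S sigma x0))
   <-> only_cycle_is_node1_loop S).
Proof.
move=> n2 Hone Hne; split.
  exact: lhs_rhs.
move=> Hcyc x0 sigma.
have i0 : 'I_n := Ordinal (leq_trans (ltn0Sn 1) n2).
exact: (traj_conv Hone Hne Hcyc (sigma 0%N) sigma x0 i0).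
Qed.
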